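(* Let $q$ be a power of $2$, let $a,b\in\mathbb{F}_q$ with $b\ne0$, and let $n\ge2$ be an integer with $\gcd(n+1,q)=1$. Then $n$ is even, and $\hat C_n(a,b)$ is LCD if and only if $$a/b\notin\{-1/b+\theta^i+\theta^{-i} : 1\le i\le n/2\},$$ where $\theta\in\overline{\mathbb{F}}_q$ is a primitive $(n+1)$-th root of unity.
   Context: For $a,b\in\mathbb{F}_q$ and $n\ge 2$, $\hat T_n(a,b)$ denotes the $n\times n$ symmetric tridiagonal Toeplitz matrix over $\mathbb{F}_q$ with all diagonal entries equal to $a$, all entries on the first super- and sub-diagonals equal to $b$, and all other entries $0$. $\hat C_n(a,b)$ is the $[2n,n]$ linear code over $\mathbb{F}_q$ with generator matrix $[I_n\mid \hat T_n(a,b)]$. A linear code $C$ is LCD if $C\cap C^\perp=\{0\}$ (Euclidean dual). *)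

(* Defs.v *)
From HB Require Import structures.
From mathcomp Require Import all_boot all_order all_algebra all_field.
Set Implicit Arguments. Unset Strict Implicit. Unset Printing Implicit Defensive.
Import GRing.Theory.
Local Open Scope ring_scope.

Definition trid_toeplitz (F : nzRingType) (n : nat) (a b : F) : 'M[F]_n :=
  \matrix_(i < n, j < n)
     if i == j then a
     else if (i.+1 == j :> nat) || (j.+1 == i :> nat) then b else 0.

Definition gen_C (F : nzRingType) (n : nat) (a b : F) : 'M[F]_(n, n + n) :=
  row_mx 1%:M (trid_toeplitz n a b).

Definition in_code (F : fieldType) (m N : nat) (G : 'M[F]_(m, N)) (x : 'rV[F]_N) : Prop :=
  (x <= G)%MS.

Definition in_dual (F : fieldType) (m N : nat) (G : 'M[F]_(m, N)) (x : 'rV[F]_N) : Prop :=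
  forall c : 'rV[F]_N, in_code G c -> x *m c^T = 0.

Definition is_LCD (F : fieldType) (m N : nat) (G : 'M[F]_(m, N)) : Prop :=
  forall x : 'rV[F]_N, in_code G x -> in_dual G x -> x = 0.

(* Main.v *)
Require Import Defs.
From HB Require Import structures.
From mathcomp Require Import all_boot all_order all_algebra all_field.
From mathcomp Require Import zify ring.
Set Implicit Arguments. Unset Strict Implicit. Unset Printing Implicit Defensive.
Import GRing.Theory.
Local Open Scope ring_scope.
Fixpoint Useq (R : nzRingType) (x : R) (j : nat) : R :=
  match j with
  | 0 => 0
  | 1 => 1
  | S ((S j') as j1) => x * Useq x j1 - Useq x j'
  end.

Lemma UseqSS (R : nzRingType) (x : R) j : Useq x j.+2 = x * Useq x j.+1 - Useq x j.
Proof. by []. Qed.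

Lemma Useq_ind2 (P : nat -> Prop) : P 0%N -> P 1%N -> (forall j, P j -> P j.+1 -> P j.+2) ->
  forall j, P j.
Proof.
move=> h0 h1 hs j; suff: P j /\ P j.+1 by case.
by elim: j => [|j [IH1 IH2]]; split => //; apply: hs.
Qed.

Lemma Useq_rmorph (R S : nzRingType) (f : {rmorphism R -> S}) x j :
  f (Useq x j) = Useq (f x) j.
Proof.
elim/Useq_ind2: j => [||j IH1 IH2]; rewrite ?rmorph0 ?rmorph1 //.
by rewrite !UseqSS rmorphB rmorphM IH1 IH2.
Qed.

Lemma Useq_add (R : comNzRingType) (x : R) a b :
  Useq x (a + b).+1 = Useq x a.+1 * Useq x b.+1 - Useq x a * Useq x b.
Proof.
elim/Useq_ind2: a => [||a IH1 IH2].
- by rewrite /= mul1r mul0r subr0.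
- by rewrite add1n UseqSS /= mulr1 subr0 mul1r.
- rewrite !addSn UseqSS IH1 -[(a+b).+2]/((a.+1+b).+1) IH2 (UseqSS x a.+1) (UseqSS x a).
  ring.
Qed.

Lemma Useq_horner (R : comNzRingType) (x : R) j : (Useq 'X j).[x] = Useq x j.
Proof.
elim/Useq_ind2: j => [||j IH1 IH2]; rewrite ?hornerC //.
by rewrite !UseqSS hornerD hornerN hornerM hornerX IH1 IH2.
Qed.

Lemma Useq_size (R : idomainType) j : size (Useq ('X : {poly R}) j.+1) = j.+1.
Proof.
elim/Useq_ind2: j => [||j IH1 IH2]; first by rewrite /= size_poly1.
- by rewrite UseqSS /= mulr1 subr0 size_polyX.
- rewrite UseqSS size_polyDl mulrC size_mulX -?size_poly_eq0 ?IH2 ?size_polyN ?IH1 //.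
Qed.

Lemma Useq_unit (R : fieldType) (t : R) j : t != 0 ->
  Useq (t + t^-1) j * (t - t^-1) = t ^+ j - t^-1 ^+ j.
Proof.
move=> t0; elim/Useq_ind2: j => [||j IH1 IH2].
- by rewrite /= mul0r !expr0 subrr.
- by rewrite /= mul1r !expr1.
- rewrite UseqSS mulrBl -mulrA IH2 IH1 !exprS !exprVn.
  have tj : t ^+ j != 0 by rewrite expf_neq0.
  by field; rewrite tj t0.
Qed.

Section Lside.
Variables (L : fieldType) (m : nat) (theta : L).
Hypothesis h2 : (2%:R : L) = 0.
Hypothesis hm : (0 < m)%N.
Hypothesis prim : (m.*2).+1.-primitive_root theta.

Let th0 : theta != 0.
Proof.
apply/negP => /eqP t0; have := prim_expr_order prim.
by rewrite t0 expr0n /= => /eqP; rewrite eq_sym oner_eq0.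
Qed.

Definition cc (i : nat) : L := theta ^+ i + (theta ^+ i)^-1.

Lemma thpow_ne1 i : (0 < i)%N -> (i <= m.*2)%N -> theta ^+ i != 1.
Proof.
move=> i0 im; rewrite -(prim_order_dvd prim); apply/negP => /dvdn_leq.
by move=> /(_ i0); lia.
Qed.

Lemma cc_root i : (1 <= i)%N -> (i <= m)%N -> Useq (cc i) (m.*2).+1 = 0.
Proof.
move=> i1 im; set t := theta ^+ i.
have t0 : t != 0 by rewrite expf_neq0.
have := Useq_unit (m.*2).+1 t0.
have e1 : t ^+ (m.*2).+1 = 1 by rewrite /t -exprM mulnC exprM (prim_expr_order prim) expr1n.
rewrite exprVn e1 invr1 subrr => /eqP; rewrite mulf_eq0 => /orP[/eqP//|].
rewrite subr_eq0 => /eqP e.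
have : t * t = 1 by rewrite {2}e mulfV.
rewrite /t -exprD => /eqP; rewrite (negbTE (thpow_ne1 _ _)) //; lia.
Qed.

Definition EE : {poly L} := Useq 'X m.+1 + Useq 'X m.

Lemma Useq_sq (y : L) : Useq y (m.*2).+1 = (EE.[y]) ^+ 2.
Proof.
rewrite /EE hornerD !Useq_horner -addnn Useq_add.
set A := Useq y m.+1; set B := Useq y m.
have -> : (A + B) ^+ 2 = A * A - B * B + 2%:R * (A * B + B * B) by ring.
by rewrite h2 mul0r addr0.
Qed.

Lemma cc_inj i j : (1 <= i <= m)%N -> (1 <= j <= m)%N -> cc i = cc j -> i = j.
Proof.
move=> /andP[i1 im] /andP[j1 jm]; rewrite /cc => e.
set s := theta ^+ i in e; set r := theta ^+ j in e.
have s0 : s != 0 by rewrite expf_neq0.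
have r0 : r != 0 by rewrite expf_neq0.
have : (s - r) * (1 - (s * r)^-1) = 0.
  rewrite -[RHS](subrr (s + s^-1)) {2}e; field; by rewrite s0 r0.
move/eqP; rewrite mulf_eq0 => /orP[|].
  rewrite subr_eq0 (eq_prim_root_expr prim) !modn_small; [by move/eqP| lia | lia].
rewrite subr_eq0 eq_sym invr_eq1 /s /r -exprD (negbTE (thpow_ne1 _ _)) //; lia.
Qed.

Lemma L_side (y : L) :
  Useq y (m.*2).+1 = 0 <-> exists i, [/\ (1 <= i)%N, (i <= m)%N & y = cc i].
Proof.
split; last by case=> i [i1 im ->]; apply: cc_root.
rewrite Useq_sq => /eqP; rewrite expf_eq0 /= => /eqP Ey.
set rs := [seq cc i | i <- iota 1 m].
have rts : all (root EE) rs.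
  apply/allP => z /mapP[i]; rewrite mem_iota => /andP[i1 im] ->.
  have := cc_root i1 (_ : i <= m)%N; rewrite Useq_sq.
  by move=> /(_ ltac:(lia)) /eqP; rewrite expf_eq0 /= /root.
have urs : uniq_roots rs.
  rewrite uniq_rootsE map_inj_in_uniq ?iota_uniq //.
  move=> i j; rewrite !mem_iota => hi hj; apply: cc_inj; lia.
have [q Eq] := uniq_roots_prod_XsubC rts urs.
have szE : size EE = m.+1.
  by rewrite /EE size_polyDl Useq_size // -(prednK hm) Useq_size.
have q0 : q != 0 by apply/negP => /eqP q0; move: szE; rewrite Eq q0 mul0r size_poly0.
have pr0 : \prod_(z <- rs) ('X - z%:P) != 0.
  by rewrite -size_poly_eq0 size_prod_XsubC.
have : size q = 1%N.
  move: szE; rewrite Eq size_mul // size_prod_XsubC size_map size_iota.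
  by case: (size q) => [|[|s]] //=; lia.
move/eqP/size_poly1P => [c c0 qc].
move: Ey; rewrite Eq qc hornerM hornerC horner_prod => /eqP.
rewrite mulf_eq0 (negbTE c0) /= prodf_seq_eq0 => /hasP[z /mapP[i]].
rewrite mem_iota => /andP[i1 im] -> /=; rewrite hornerXsubC subr_eq0 => /eqP ->.
exists i; split => //; lia.
Qed.
End Lside.

Section Tri.
Variables (F : comNzRingType) (a b : F).
Definition tt (i j : nat) : F :=
  if i == j then a else if (i.+1 == j) || (j.+1 == i) then b else 0.

Lemma sum_tri (s : nat -> F) (hs0 : s 0%N = 0) N j :
  \sum_(0 <= i < N) s i.+1 * tt i j =
  (if (j < N)%N then a * s j.+1 else 0) + (if (j <= N)%N then b * s j else 0)
  + (if (j.+2 <= N)%N then b * s j.+2 else 0).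
Proof.
elim: N => [|N IH].
  rewrite big_geq //; case: j => [|j] /=; rewrite ?hs0; ring.
rewrite big_nat_recr //= IH /tt.
case: (ltngtP N j) => [lt|gt|<-].
- have [e|ne] := eqVneq N.+1 j.
    subst j; repeat (case: ifP => ? /=); try lia; ring.
  repeat (case: ifP => ? /=); try lia; ring.
- have [e|ne] := eqVneq j.+1 N.
    subst N; repeat (case: ifP => ? /=); try lia; ring.
  repeat (case: ifP => ? /=); try lia; ring.
- repeat (case: ifP => ? /=); try lia; ring.
Qed.
End Tri.

Section Mat.
Variables (F : fieldType) (a b : F).
Hypothesis h2 : (2%:R : F) = 0.

Lemma entry_uT n (s : nat -> F) (hs0 : s 0%N = 0) (hsn : s n.+1 = 0) (j : 'I_n) :
  ((\row_(i < n) s i.+1) *m trid_toeplitz n a b) 0 j = a * s j.+1 + b * s j + b * s j.+2.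
Proof.
rewrite !mxE.
transitivity (\sum_(i < n) s i.+1 * tt a b i j).
  by apply: eq_bigr => i _; rewrite !mxE.
rewrite -(big_mkord xpredT (fun i => s i.+1 * tt a b i j)) sum_tri //.
have jn := ltn_ord j.
rewrite jn ltnW //; case: ifP => // h.
have -> : j.+2 = n.+1 by lia.
by rewrite hsn mulr0.
Qed.

Lemma tr_T n : (trid_toeplitz n a b)^T = trid_toeplitz n a b.
Proof.
apply/matrixP => i j; rewrite !mxE eq_sym; case: eqP => // _.
by rewrite orbC.
Qed.

Definition Inj n (A : 'M[F]_n) := forall u : 'rV_n, u *m A = 0 -> u = 0.

Lemma LCD_iff n : is_LCD (gen_C n a b) <-> Inj (1%:M + trid_toeplitz n a b).
Proof.
set T := trid_toeplitz n a b.
have TT : T + T = 0.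
  by apply/matrixP => i j; rewrite !mxE -mulr2n -mulr_natr h2 mulr0.
have GG : gen_C n a b *m (gen_C n a b)^T = (1%:M + T) *m (1%:M + T).
  rewrite /gen_C tr_row_mx mul_row_col trmx1 mulmx1 tr_T -/T.
  rewrite mulmxDl !mulmxDr !mul1mx mulmx1 addrA -(addrA _ T T) TT addr0 //.
have uG (u : 'rV_n) : u *m gen_C n a b = row_mx u (u *m T).
  by rewrite /gen_C mul_mx_row mulmx1.
split.
- move=> LCD u hu.
  have : u *m gen_C n a b = 0.
    apply: LCD; first exact: submxMl.
    move=> c /submxP [v ->]; rewrite trmx_mul mulmxA -(mulmxA u) GG mulmxA hu.
    by rewrite !mul0mx.
  by rewrite uG => /eqP; rewrite row_mx_eq0 => /andP[/eqP].
- move=> inj x /submxP [u ->] hd.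
  have h : u *m gen_C n a b *m (gen_C n a b)^T = 0.
    apply/rowP => j; rewrite mxE.
    have := hd (delta_mx 0 j *m gen_C n a b) (submxMl _ _).
    rewrite trmx_mul trmx_delta mulmxA -colE => /matrixP /(_ 0 0).
    by rewrite !mxE.
  move: h; rewrite -mulmxA GG mulmxA => /inj /inj ->.
  by rewrite mul0mx.
Qed.
End Mat.

Section InjS.
Variables (F : fieldType) (a b : F).
Hypothesis hb : b != 0.

Lemma Inj_iff n : Inj (1%:M + trid_toeplitz n.+1 a b) <-> Useq (- (1 + a) / b) n.+2 != 0.
Proof.
set x := - (1 + a) / b.
split.
- move=> inj; apply/negP => /eqP U0.
  pose s := Useq x.
  have hu : (\row_(i < n.+1) s i.+1) *m (1%:M + trid_toeplitz n.+1 a b) = 0.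
    rewrite mulmxDr mulmx1; apply/rowP => j.
    rewrite [LHS]mxE (entry_uT a b (s := s)) // !mxE /s UseqSS /x.
    by field.
  have := inj _ hu => /rowP /(_ ord0); rewrite !mxE /= => /eqP.
  by rewrite oner_eq0.
- move=> U0 u hu.
  pose s j := if j is j'.+1 then (if (j' < n.+1)%N then u 0 (inord j') else 0) else 0.
  have us : u = \row_(i < n.+1) s i.+1.
    by apply/rowP => i; rewrite !mxE /= ltn_ord inord_val.
  have rec j : (j < n.+1)%N -> s j.+2 = x * s j.+1 - s j.
    move=> jn; move: hu; rewrite us mulmxDr mulmx1 => /rowP /(_ (Ordinal jn)).
    rewrite [LHS]mxE (entry_uT a b (s := s)) //; last by rewrite /s ltnn. rewrite !mxE.
    move=> E.
    have -> : s j.+2 = (s j.+1 + (a * s j.+1 + b * s j + b * s j.+2)) / b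
                       - (1 + a) / b * s j.+1 - s j by field.
    by rewrite E /x; field.
  have sol j : (j <= n.+2)%N -> s j = s 1%N * Useq x j.
    elim/Useq_ind2: j => [||j IH1 IH2 hj]; first by rewrite mulr0.
      by rewrite mulr1.
    by rewrite rec ?IH1 ?IH2 ?UseqSS; [ring| lia| lia| lia].
  have s1 : s 1%N = 0.
    have := sol n.+2 (leqnn _); rewrite /= ltnn => /esym /eqP.
    by rewrite mulf_eq0 (negbTE U0) orbF => /eqP.
  apply/rowP => i; rewrite us !mxE sol; [by rewrite s1 mul0r| ].
  have := ltn_ord i; lia.
Qed.
End InjS.

Unset Implicit Arguments.

Theorem theorem2p6 (F : finFieldType) (k : nat) (hq : #|F| = (2 ^ k)%N)
    (a b : F) (hb : b != 0) (n : nat) (hn : (2 <= n)%N)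
    (hcop : coprime n.+1 #|F|) :
  ~~ odd n /\
  (forall (L : fieldType) (f : {rmorphism F -> L}) (theta : L),
     n.+1.-primitive_root theta ->
     (is_LCD (gen_C n a b) <->
      ~ (exists i : nat, [/\ (1 <= i)%N, (i <= n./2)%N &
           f (a / b) = f (- 1 / b) + theta ^+ i + (theta ^+ i)^-1]))).
Proof.
have c2 : (2%:R : F) = 0 by apply: pcharf0; apply: (card_finPcharP hq).
have k0 : (0 < k)%N.
  case: k hq => // hq; have := finNzRing_gt1 F; rewrite hq expn0 //.
have ev : ~~ odd n.
  move: hcop; rewrite hq coprime_pexpr // coprimen2 /=.
  by case: (odd n).
split => // L f theta prim.
set m := n./2.
have nm : n = m.*2 by rewrite /m halfK (negbTE ev) subn0.
have hm : (0 < m)%N by lia.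
have c2L : (2%:R : L) = 0 by rewrite -(rmorph_nat f) c2 rmorph0.
set x := - (1 + a) / b.
have ax : a / b = - 1 / b + x.
  apply/eqP; rewrite -subr_eq0.
  have -> : a / b - (- 1 / b + x) = 2%:R * (a + 1) / b by rewrite /x; field.
  by rewrite c2 !mul0r.
rewrite (LCD_iff a b c2).
have := Inj_iff a hb n.-1; rewrite prednK; last by lia.
move=> ->.
have e1 : (Useq x n.+1 != 0) <-> ~ (Useq (f x) (m.*2).+1 = 0).
  rewrite -nm -Useq_rmorph; split => h.
    by move=> /eqP; rewrite fmorph_eq0; apply/negP.
  by apply/negP => /eqP h0; apply: h; rewrite h0 rmorph0.
rewrite e1; rewrite nm in prim.
have := L_side c2L hm prim (f x) => hL.
split => H1 H2; apply: H1.
- apply/hL; case: H2 => i [i1 im e]; exists i; split => //.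
  by move: e; rewrite ax rmorphD -addrA => /addrI.
- move/hL: H2 => [i [i1 im e]]; exists i; split => //.
  by rewrite ax rmorphD e /cc addrA.
Qed.
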